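(* Let $A=\{a_1^{k_1},\ldots,a_n^{k_n}\}$ be a multiset, let $m\ge 0$ be an integer, let $r=\max(k_1,\ldots,k_n)$ and $s=\min(m,r)$. Let $\Lambda_m(A)$ be the set of all tuples $(\lambda_1,\ldots,\lambda_s)$ of non-negative integers satisfying $$\sum_{i=1}^s i\lambda_i=m \quad\text{and}\quad \sum_{i=j}^s\lambda_i\le \overline{k_j}\ \ \text{for } j=1,\ldots,s.$$ Then $$|C_m(A)|=\sum_{(\lambda_1,\ldots,\lambda_s)\in\Lambda_m(A)}\ \prod_{j=1}^s\binom{\overline{k_j}-\sum_{i=j+1}^s\lambda_i}{\lambda_j},$$ where an empty sum $\sum_{i=s+1}^s\lambda_i$ is $0$.
   Context: A multiset $A=\{a_1^{k_1},\ldots,a_n^{k_n}\}$ consists of distinct elements $a_1,\ldots,a_n$ with positive integer multiplicities $k_1,\ldots,k_n$; its cardinality is $|A|=k_1+\cdots+k_n$. A submultiset of $A$ is a multiset $\{a_1^{r_1},\ldots,a_n^{r_n}\}$ with integers $0\le r_i\le k_i$ (elements with $r_i=0$ being absent), of cardinality $r_1+\cdots+r_n$. $C_m(A)$ denotes the set of all submultisets of $A$ of cardinality $m$. For each integer $j\ge1$, $\overline{k_j}=|\{i\in\{1,\ldots,n\}: k_i\ge j\}|$ (the adjoint specification of $A$). *)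

(* Defs.v *)
(* A multiset {a_1^{k_1},...,a_n^{k_n}} is represented by its
   multiplicity function k : 'I_n -> nat (the elements a_i are the indices i). *)
From mathcomp Require Import all_boot.
Set Implicit Arguments. Unset Strict Implicit. Unset Printing Implicit Defensive.

Definition maxmult (n : nat) (k : 'I_n -> nat) : nat := \max_(i < n) k i.

(* C_m(A): submultisets {a_1^{r_1},...,a_n^{r_n}}, 0 <= r_i <= k_i, of
   cardinality m; a submultiset is its multiplicity vector (r_i), whose
   entries are bounded by max k_i, hence stored in 'I_(maxmult k).+1. *)
Definition Csub (n : nat) (k : 'I_n -> nat) (m : nat)
  : {set {ffun 'I_n -> 'I_(maxmult k).+1}} :=
  [set f : {ffun 'I_n -> 'I_(maxmult k).+1} | [forall i, (f i <= k i)%N] && (\sum_(i < n) (f i : nat) == m)].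

Definition kbar (n : nat) (k : 'I_n -> nat) (j : nat) : nat :=
  #|[set i : 'I_n | j <= k i]|.

Definition sidx (n : nat) (k : 'I_n -> nat) (m : nat) : nat := minn m (maxmult k).

(* Lambda_m(A): tuples (lambda_1,...,lambda_s); we index by t : 'I_s with
   lambda_{t+1} = l t. Entries are bounded by m (since sum i*lambda_i = m),
   so they are stored in 'I_m.+1 without loss. *)
Definition Lambda (n : nat) (k : 'I_n -> nat) (m : nat)
  : {set {ffun 'I_(sidx k m) -> 'I_m.+1}} :=
  [set l : {ffun 'I_(sidx k m) -> 'I_m.+1} | (\sum_(i < sidx k m) i.+1 * l i == m)
        && [forall j : 'I_(sidx k m),
              (\sum_(i < sidx k m | (j <= i)%N) (l i : nat)) <= kbar k j.+1]].

(* Main.v *)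
Require Import Defs.
From mathcomp Require Import all_boot.
Set Implicit Arguments. Unset Strict Implicit. Unset Printing Implicit Defensive.

Section Gen.
Variables (T : finType) (B : nat) (k : T -> nat) (lam : nat -> nat).

Definition cnt (g : {ffun T -> 'I_B}) (j : nat) := #|[set i | (g i : nat) == j]|.
Definition Pg (D : {set T}) (t : nat) (g : {ffun T -> 'I_B}) :=
  [forall i, [&& (g i <= k i), (g i <= t) & ((i \notin D) ==> ((g i : nat) == 0))]]
  && all (fun j => cnt g j == lam j) (iota 1 t).
Definition cD (D : {set T}) j := #|[set i in D | j <= k i]|.
Definition Fm (D : {set T}) t :=
  \prod_(1 <= j < t.+1) 'C(cD D j - \sum_(j.+1 <= i < t.+1) lam i, lam j).

Lemma Fm_rec (D S : {set T}) t : S \subset [set i in D | t.+1 <= k i] -> #|S| = lam t.+1 ->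
  Fm D t.+1 = 'C(cD D t.+1, lam t.+1) * Fm (D :\: S) t.
Proof.
move=> sS cS; rewrite /Fm big_nat_recr //= [\sum_(t.+2 <= i < t.+2) _]big_geq // subn0 mulnC; congr (_ * _).
apply: eq_big_nat => j /andP[j1 jt].
rewrite big_nat_recr //.
have -> : cD (D :\: S) j = cD D j - #|S|.
  rewrite /cD.
  have -> : [set i in D :\: S | j <= k i] = [set i in D | j <= k i] :\: S.
    by apply/setP => i; rewrite !inE; case: (i \in S); rewrite ?andbF.
  rewrite cardsD (setIidPr _). 2:{
  apply: (subset_trans sS); apply/subsetP => i; rewrite !inE => /andP[-> h].
  exact: leq_trans (ltnW jt) h. }
  by [].
by rewrite /= cS [_ + lam t.+1]addnC subnDA.
Qed.


Lemma bij_step (D S : {set T}) t (hB : t.+1 < B) :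
  S \subset [set i in D | t.+1 <= k i] -> #|S| = lam t.+1 ->
  #|[set g | Pg D t.+1 g && ([set i | g i == Ordinal hB] == S)]| =
  #|[set g | Pg (D :\: S) t g]|.
Proof.
move=> sS cS.
set top := Ordinal hB.
have h0 : 0 < B by apply: leq_ltn_trans (leq0n t.+1) hB.
set z := Ordinal h0.
set h := fun g : {ffun T -> 'I_B} => [ffun i => if i \in S then top else g i].
have sX : forall i, i \in S -> (i \in D) && (t.+1 <= k i).
  by move=> i /(subsetP sS); rewrite inE.
suff -> : [set g | Pg D t.+1 g && ([set i | g i == top] == S)] =
          h @: [set g | Pg (D :\: S) t g].
  apply: card_in_imset => g1 g2; rewrite !inE /Pg.
  move=> /andP[/forallP H1 _] /andP[/forallP H2 _] /ffunP E; apply/ffunP => i.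
  move: (E i); rewrite !ffunE; case: ifP => iS // _.
  have /and3P[_ _ /implyP a1] := H1 i; have /and3P[_ _ /implyP a2] := H2 i.
  by apply/ord_inj; rewrite (eqP (a1 _)) ?(eqP (a2 _)) // !inE iS.
apply/setP => g; rewrite inE; apply/idP/imsetP.
- case/andP => /andP[/forallP Hg Hc] /eqP Es.
  have gS : forall i, i \in S -> (g i : nat) = t.+1.
    by move=> i; rewrite -Es inE => /eqP ->.
  exists [ffun i => if i \in S then z else g i].
  + rewrite inE /Pg; apply/andP; split.
    * apply/forallP => i; rewrite ffunE; case: ifP => iS /=; first by rewrite implybT.
      have /and3P[a b c] := Hg i; rewrite a /=.
      have ne : (g i : nat) != t.+1.
        apply: contraFN iS => e; rewrite -Es inE; apply/eqP/val_inj; exact/eqP.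
      rewrite -ltnS ltn_neqAle ne b /=; by rewrite !inE iS.
    * apply/allP => j; rewrite mem_iota => /andP[j1 jt].
      have jt' : j \in iota 1 t.+1 by rewrite mem_iota j1 addnS ltnS ltnW.
      move/eqP: (allP Hc j jt') => <-; rewrite /cnt; apply/eqP; apply: eq_card => i.
      rewrite !inE ffunE; case: ifP => iS //=; rewrite gS //.
      case: j j1 jt {jt'} => // j _ jt; rewrite add1n ltnS in jt; by rewrite eqSS (gtn_eqF jt).
  + apply/ffunP => i; rewrite /h ffunE; case: ifP => iS; last by rewrite ffunE iS.
    by apply/ord_inj; rewrite /= gS.
- case=> g' Hg' ->; rewrite inE /Pg in Hg'; case/andP: Hg' => /forallP Hg Hc.
  have g'S : forall i, i \in S -> (g' i : nat) = 0.
    move=> i iS; have /and3P[_ _ /implyP c] := Hg i; apply/eqP/c; by rewrite !inE iS.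
  have g't : forall i, (g' i : nat) <= t by move=> i; case/and3P: (Hg i).
  apply/andP; split; [apply/andP; split|].
  + apply/forallP => i; rewrite ffunE; case: ifP => iS /=.
      by have /andP[iD ki] := sX i iS; rewrite ki leqnn iD.
    have /and3P[a b c] := Hg i; rewrite a (leq_trans b (leqnSn t)) /=.
    by move: c; rewrite !inE iS.
  + rewrite -[t.+1]addn1 iotaD all_cat /= add1n andbT; apply/andP; split.
    * apply/allP => j; rewrite mem_iota => /andP[j1 jt].
      have := allP Hc j; rewrite mem_iota j1 jt => /(_ isT) /eqP <-.
      rewrite /cnt; apply/eqP; apply: eq_card => i.
      rewrite !inE ffunE; case: ifP => iS //=; rewrite g'S //.
      case: j j1 jt => // j _ jt; rewrite add1n ltnS in jt; by rewrite eqSS (gtn_eqF jt).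
    * rewrite /cnt -cS; apply/eqP; apply: eq_card => i.
      rewrite !inE ffunE; case: ifP => iS //=; first by rewrite eqxx.
      by rewrite ltn_eqF // ltnS.
  + apply/eqP/setP => i; rewrite inE ffunE; case: ifP => iS; first by rewrite eqxx.
    by rewrite -val_eqE /= ltn_eqF // ltnS.
Qed.


Definition Rm (D : {set T}) t :=
  \prod_(1 <= j < t.+1) 'C(cD D j - \sum_(j.+1 <= i < t.+2) lam i, lam j).

Lemma Fm_split (D S : {set T}) t : S \subset [set i in D | t.+1 <= k i] -> #|S| = lam t.+1 ->
  Fm D t.+1 = 'C(cD D t.+1, lam t.+1) * Rm D t /\ Fm (D :\: S) t = Rm D t.
Proof.
move=> sS cS; split.
  by rewrite /Fm /Rm big_nat_recr //= [\sum_(t.+2 <= i < t.+2) _]big_geq // subn0 mulnC.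
rewrite /Fm /Rm; apply: eq_big_nat => j /andP[j1 jt].
rewrite [\sum_(j.+1 <= i < t.+2) _]big_nat_recr //.
have -> : cD (D :\: S) j = cD D j - #|S|.
  rewrite /cD.
  have -> : [set i in D :\: S | j <= k i] = [set i in D | j <= k i] :\: S.
    by apply/setP => i; rewrite !inE; case: (i \in S); rewrite ?andbF.
  rewrite cardsD (setIidPr _) //.
  apply: (subset_trans sS); apply/subsetP => i; rewrite !inE => /andP[-> h].
  exact: leq_trans (ltnW jt) h.
by rewrite /= cS [_ + lam t.+1]addnC subnDA.
Qed.

Lemma count_ok t (D : {set T}) : t < B -> #|[set g | Pg D t g]| = Fm D t.
Proof.
elim: t D => [|t IH] D hB.
  set z := Ordinal hB.
  have -> : [set g | Pg D 0 g] = [set [ffun => z]].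
    apply/setP => g; rewrite !inE /Pg /= andbT; apply/forallP/eqP.
    - move=> h; apply/ffunP => i; rewrite ffunE; apply/ord_inj => /=.
      by have /and3P[_ h0 _] := h i; move: h0; rewrite leqn0 => /eqP.
    - by move=> -> i; rewrite ffunE /= implybT.
  by rewrite cards1 /Fm big_geq.
set top := Ordinal hB.
set X := [set i in D | t.+1 <= k i].
set Dr := [set S : {set T} | S \subset X & #|S| == lam t.+1].
rewrite -sum1dep_card (partition_big (fun g : {ffun T -> 'I_B} => [set i | g i == top]) (mem Dr)); last first.
  move=> g; rewrite /Pg => /andP[/forallP Hg Hc]; change ([set i | g i == top] \in Dr).
  rewrite inE; apply/andP; split.
    apply/subsetP => i; rewrite !inE => /eqP gi.
    have /and3P[a _ c] := Hg i; rewrite gi in a c; rewrite a andbT.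
    by apply: contraLR c => ->.
  have := allP Hc t.+1; rewrite mem_iota add1n ltnSn => /(_ isT) /eqP <-.
  apply/eqP; apply: eq_card => i; rewrite !inE -val_eqE //.
have Hin : forall S, S \in Dr -> \sum_(g | Pg D t.+1 g && ([set i | g i == top] == S)) 1 = Rm D t.
  move=> S; rewrite inE; case/andP => sS /eqP cS.
  rewrite sum1dep_card bij_step // IH ?(ltnW hB) //.
  by case: (Fm_split sS cS).
have cDr : #|Dr| = 'C(cD D t.+1, lam t.+1) by rewrite cards_draws.
rewrite (eq_bigr _ Hin) sum_nat_const.
have [S0 HS0 | H0] := pickP (mem Dr).
  have : S0 \in Dr by [].
  rewrite inE; case/andP => sS /eqP cS.
  by case: (Fm_split sS cS) => -> _; rewrite cDr.
have Dr0 : #|Dr| = 0 by apply: eq_card0.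
by rewrite /Fm big_nat_recr //= [\sum_(t.+2 <= i < t.+2) _]big_geq // subn0 -cDr Dr0 mul0n muln0.
Qed.

End Gen.

Lemma sum_bool (T : finType) (b : pred T) : \sum_i (b i : nat) = #|[set i | b i]|.
Proof. by rewrite -sum1dep_card [RHS]big_mkcond; apply: eq_bigr => i _; case: (b i). Qed.

Lemma sumA s x : x <= s -> \sum_(j < s) (x == j.+1) * j.+1 = x.
Proof.
case: x => [|x] xs; first by rewrite big1.
rewrite (bigD1 (Ordinal xs)) //= eqxx mul1n big1 ?addn0 // => j.
by rewrite -val_eqE /= eqSS eq_sym => /negbTE ->.
Qed.

Lemma sumB s x j : x <= s -> \sum_(i < s | j <= i) (x == i.+1 : nat) = (j < x).
Proof.
case: x => [|x] xs; first by rewrite big1.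
case: (leqP j x) => jx.
  rewrite (bigD1 (Ordinal xs)) //= eqxx big1 ?addn0 ?ltnS ?jx // => i /andP[_].
  by rewrite -val_eqE /= eqSS eq_sym => /negbTE ->.
rewrite big1 ?ltnS ?(leqNgt j x) ?jx // => i ji; rewrite eqSS; case: eqP => // e.
by move: ji; rewrite -e leqNgt jx.
Qed.

Section Cnt.
Variables (T : finType) (B s : nat) (f : {ffun T -> 'I_B}).
Hypothesis fs : forall i, (f i : nat) <= s.
Definition cntf j := #|[set i | (f i : nat) == j]|.

Lemma cnt_sum : \sum_i (f i : nat) = \sum_(j < s) j.+1 * cntf j.+1.
Proof.
rewrite (eq_bigr (fun i => \sum_(j < s) ((f i : nat) == j.+1) * j.+1)); last first.
  by move=> i _; rewrite sumA.
rewrite exchange_big; apply: eq_bigr => j _.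
by rewrite -big_distrl /= mulnC /cntf -sum_bool.
Qed.

Lemma cnt_ge j : \sum_(i < s | j <= i) cntf i.+1 = #|[set x | j < f x]|.
Proof.
rewrite -sum_bool (eq_bigr (fun x => \sum_(i < s | j <= i) ((f x : nat) == i.+1 : nat))); last first.
  by move=> x _; rewrite sumB.
by rewrite exchange_big; apply: eq_bigr => i _; rewrite /cntf -sum_bool.
Qed.
End Cnt.

Definition lamf (s m : nat) (l : {ffun 'I_s -> 'I_m.+1}) (j : nat) :=
  \sum_(i < s | i.+1 == j) (l i : nat).

Lemma lamfE s m (l : {ffun 'I_s -> 'I_m.+1}) (j : 'I_s) : lamf l j.+1 = l j.
Proof.
rewrite /lamf (eq_bigl (fun i => i == j)) ?big_pred1_eq // => i.
Qed.

Theorem theorem4p1 (n : nat) (k : 'I_n -> nat) (m : nat)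
  (hk : forall i, 0 < k i) :
  #|Csub k m| =
  \sum_(l in Lambda k m)
     \prod_(j < sidx k m)
        'C(kbar k j.+1 - \sum_(i < sidx k m | (j < i)%N) (l i : nat), l j).
Proof.
set s := sidx k m.
have sB : s < (maxmult k).+1 by rewrite ltnS /s /sidx geq_minr.
pose pT (f : {ffun 'I_n -> 'I_(maxmult k).+1}) : {ffun 'I_s -> 'I_m.+1} :=
  [ffun j : 'I_s => inord (cntf f j.+1)].
have Cs : forall f, f \in Csub k m -> (forall i, f i <= k i) /\ (forall i, (f i : nat) <= s)
    /\ \sum_i (f i : nat) = m.
  move=> f; rewrite inE => /andP[/forallP fk /eqP fm]; split => //; split => // i.
  rewrite leq_min; apply/andP; split.
    by rewrite -fm (bigD1 i) //= leq_addr.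
  exact: (leq_trans (fk i) (leq_bigmax (F:=k) i)).
have cntm : forall f : {ffun 'I_n -> 'I_(maxmult k).+1}, (forall i, (f i : nat) <= s) -> \sum_i (f i : nat) = m ->
    forall j : 'I_s, cntf f j.+1 <= m.
  move=> f fs fm j; rewrite -fm (cnt_sum fs) (bigD1 j) //=.
  apply: leq_trans (leq_addr _ _); exact: leq_pmull.
rewrite -sum1_card (partition_big pT (mem (Lambda k m))); last first.
  move=> f /Cs [fk [fs fm]]; change (pT f \in Lambda k m); rewrite inE; apply/andP; split.
    apply/eqP; rewrite -[RHS]fm (cnt_sum fs); apply/eq_bigr => j _.
    by rewrite ffunE inordK // ltnS cntm.
  apply/forallP => j.
  rewrite (eq_bigr (fun i : 'I_s => cntf f i.+1)); last first.
    by move=> i _; rewrite ffunE inordK // ltnS cntm.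
  rewrite (cnt_ge fs) /kbar; apply: subset_leq_card; apply/subsetP => x.
  by rewrite !inE => /leq_trans; apply.
apply: eq_bigr => l Hl.
rewrite sum1dep_card.
have -> : [set f | (f \in Csub k m) && (pT f == l)] =
          [set g | Pg k (lamf l) setT s g].
  apply/setP => f; rewrite !inE /Pg.
  have : l \in Lambda k m by [].
  rewrite inE; case/andP => /eqP lm /forallP lk.
  apply/idP/idP.
  - case/andP => /andP[/forallP fk /eqP fm] /eqP <-.
    have [_ [fs _]] : (forall i, f i <= k i) /\ (forall i, (f i : nat) <= s)
        /\ \sum_i (f i : nat) = m.
      by apply: Cs; rewrite inE; apply/andP; split; [apply/forallP|apply/eqP].
    apply/andP; split.
      by apply/forallP => i; rewrite fk fs in_setT.
    apply/allP => j; rewrite mem_iota => /andP[j1 js].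
    case: j j1 js => // j _ js; rewrite add1n ltnS in js.
    have := lamfE (pT f) (Ordinal js); rewrite /= => ->.
    rewrite ffunE inordK //; rewrite ltnS; exact: (cntm f fs fm (Ordinal js)).
  - case/andP => /forallP H Hc.
    have fk : forall i, f i <= k i by move=> i; case/and3P: (H i).
    have fs : forall i, (f i : nat) <= s by move=> i; case/and3P: (H i).
    have cl : forall j : 'I_s, cntf f j.+1 = l j.
      move=> j; rewrite -lamfE; apply/eqP; have := allP Hc j.+1.
      by rewrite mem_iota add1n ltnS ltnS ltn_ord; apply.
    have fm : \sum_i (f i : nat) = m.
      by rewrite (cnt_sum fs) -[RHS]lm; apply: eq_bigr => j _; rewrite cl.
    rewrite fm eqxx andbT; apply/andP; split; first by apply/forallP.
    apply/eqP/ffunP => j; apply/ord_inj; rewrite ffunE inordK; first exact: cl.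
    by rewrite cl ltn_ord.
rewrite count_ok // /Fm big_add1 /= big_mkord; apply: eq_bigr => j _.
rewrite lamfE.
have -> : cD k setT j.+1 = kbar k j.+1 by rewrite /cD /kbar; apply: eq_card => i; rewrite !inE.
congr ('C(_ - _, _)); rewrite big_add1 /= big_geq_mkord.
by apply: eq_big => [i|i _]; [|exact: lamfE].
Qed.
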